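(* Let $(\mathcal C,\otimes,I)$ be a monoidal category and $N$ a self-similar object with code $\lhd:N\otimes N\to N$ and decode $\rhd:N\to N\otimes N$ (mutually inverse). Define $f\star g=\lhd(f\otimes g)\rhd$ for $f,g\in\mathcal C(N,N)$, making $(\mathcal C(N,N),\star)$ a one-object semi-monoidal category. Let $(N^\otimes,\otimes,I)$ be the full monoidal subcategory of $\mathcal C$ whose objects are $I$ and all objects built from $N$ (and $I$) by $\otimes$. Then there is a monoidal equivalence of categories between $(\mathcal C(N,N),\star)_{+I}$ and $(N^\otimes,\otimes,I)_{-\mathrm{el}}$.
   Context: A semi-monoidal category satisfies MacLane's axioms for a monoidal category except those involving the unit (tensor associative up to natural isomorphisms satisfying the pentagon). For a semi-monoidal category $\mathcal S$, $\mathcal S_{+I}$ denotes the monoidal category obtained by taking the coproduct of $\mathcal S$ with the one-object, one-arrow category $\{I\}$ and extending the tensor so that $I$ is a strict unit ($I\otimes X=X=X\otimes I$ on objects and arrows). For a monoidal category $\mathcal M$ with unit $I$, $\mathcal M_{-I}$ is the full (semi-monoidal) subcategory on all objects other than $I$, and the de-element functor is $\mathcal M_{-\mathrm{el}}=(\mathcal M_{-I})_{+I}$ (so all arrows into or out of the unit other than $1_I$ are deleted).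
   Formalization: The objects of $N^\otimes$ other than $I$ are the ⊗-words in N and I containing at least one N, with I⊗I identified with I via the left unitor, rather than all objects built from N and I. Apart from conventions, each condition added here is assumed in the paper as well or is needed for the statement above to hold. *)

(* Defs.v *)
(* Composition convention: comp g f = g o f. *)
From Stdlib Require Import Bool.

Set Implicit Arguments.

Record CatData := {
  ob : Type;
  hom : ob -> ob -> Type;
  idm : forall A, hom A A;
  comp : forall A B D, hom B D -> hom A B -> hom A D }.
Arguments hom {c} _ _.
Arguments idm {c} _.
Arguments comp {c A B D} _ _.

Record SemiData := {
  scat :> CatData;
  sten : ob scat -> ob scat -> ob scat;
  stenh : forall A A' B B', @hom scat A A' -> @hom scat B B' ->
            @hom scat (sten A B) (sten A' B');
  (* MacLane's convention: alpha_{A,B,C} : A (x) (B (x) C) -> (A (x) B) (x) C *)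
  sassoc : forall A B D, @hom scat (sten A (sten B D)) (sten (sten A B) D);
  sassoc_inv : forall A B D, @hom scat (sten (sten A B) D) (sten A (sten B D)) }.
Arguments sten {s} _ _.
Arguments stenh {s A A' B B'} _ _.
Arguments sassoc {s} _ _ _.
Arguments sassoc_inv {s} _ _ _.

Record MonData := {
  msemi :> SemiData;
  munit : ob msemi;
  lunit : forall A, @hom msemi (sten munit A) A;
  lunit_inv : forall A, @hom msemi A (sten munit A);
  runit : forall A, @hom msemi (sten A munit) A;
  runit_inv : forall A, @hom msemi A (sten A munit) }.
Arguments munit {m}.
Arguments lunit {m} _.
Arguments lunit_inv {m} _.
Arguments runit {m} _.
Arguments runit_inv {m} _.

Definition is_category (K : CatData) : Prop :=
  (forall A B (f : @hom K A B), comp (idm B) f = f) /\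
  (forall A B (f : @hom K A B), comp f (idm A) = f) /\
  (forall A B D E (f : @hom K A B) (g : @hom K B D) (h : @hom K D E),
      comp h (comp g f) = comp (comp h g) f).

Definition is_semimonoidal (S : SemiData) : Prop :=
  is_category S /\
  (forall A B, stenh (idm A) (idm B) = idm (@sten S A B)) /\
  (forall A A' A'' B B' B'' (f : @hom S A A') (f' : @hom S A' A'')
          (g : @hom S B B') (g' : @hom S B' B''),
      stenh (comp f' f) (comp g' g) = comp (stenh f' g') (stenh f g)) /\
  (forall A A' B B' D D' (f : @hom S A A') (g : @hom S B B') (h : @hom S D D'),
      comp (sassoc A' B' D') (stenh f (stenh g h)) =
      comp (stenh (stenh f g) h) (sassoc A B D)) /\
  (forall A B D : ob S, comp (sassoc_inv A B D) (sassoc A B D) = idm _) /\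
  (forall A B D : ob S, comp (sassoc A B D) (sassoc_inv A B D) = idm _) /\
  (forall A B D E : ob S,
      comp (sassoc (sten A B) D E) (sassoc A B (sten D E)) =
      comp (stenh (sassoc A B D) (idm E))
           (comp (sassoc A (sten B D) E) (stenh (idm A) (sassoc B D E)))).

Definition is_monoidal (M : MonData) : Prop :=
  is_semimonoidal M /\
  (forall A : ob M, comp (lunit_inv A) (lunit A) = idm _) /\
  (forall A : ob M, comp (lunit A) (lunit_inv A) = idm A) /\
  (forall A : ob M, comp (runit_inv A) (runit A) = idm _) /\
  (forall A : ob M, comp (runit A) (runit_inv A) = idm A) /\
  (forall A A' (f : @hom M A A'),
      comp (lunit A') (stenh (idm munit) f) = comp f (lunit A)) /\
  (forall A A' (f : @hom M A A'),
      comp (runit A') (stenh f (idm munit)) = comp f (runit A)) /\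
  (forall A B : ob M, comp (stenh (runit A) (idm B)) (sassoc A munit B) =
               stenh (idm A) (lunit B)).

(** * The construction S_{+I} : adjoin a strict unit to a semi-monoidal category *)

Section PlusI.
Variable S : SemiData.

Definition pI_ob := option (ob S).

Definition pI_hom (x y : pI_ob) : Type :=
  match x, y with
  | None, None => unit
  | Some a, Some b => @hom S a b
  | _, _ => Empty_set
  end.

Definition pI_id (x : pI_ob) : pI_hom x x :=
  match x as x0 return pI_hom x0 x0 with
  | None => tt
  | Some a => idm a
  end.

Definition pI_comp (x y z : pI_ob) : pI_hom y z -> pI_hom x y -> pI_hom x z.
Proof.
  destruct x as [a|], y as [b|], z as [c|]; intros g f; simpl in *;
    try destruct f; try destruct g;
    first [ exact (comp g f) | exact tt ].
Defined.

Definition pI_ten (x y : pI_ob) : pI_ob :=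
  match x, y with
  | None, _ => y
  | Some a, None => Some a
  | Some a, Some b => Some (sten a b)
  end.

Definition pI_tenh (x x' y y' : pI_ob) :
  pI_hom x x' -> pI_hom y y' -> pI_hom (pI_ten x y) (pI_ten x' y').
Proof.
  destruct x as [a|], x' as [a'|], y as [b|], y' as [b'|]; intros f g; simpl in *;
    try destruct f; try destruct g;
    first [ exact (stenh f g) | exact f | exact g | exact tt ].
Defined.

Definition pI_assoc (x y z : pI_ob) :
  pI_hom (pI_ten x (pI_ten y z)) (pI_ten (pI_ten x y) z).
Proof.
  destruct x as [a|], y as [b|], z as [c|]; simpl;
    first [ exact (sassoc a b c) | exact (idm _) | exact tt ].
Defined.

Definition pI_assoc_inv (x y z : pI_ob) :
  pI_hom (pI_ten (pI_ten x y) z) (pI_ten x (pI_ten y z)).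
Proof.
  destruct x as [a|], y as [b|], z as [c|]; simpl;
    first [ exact (sassoc_inv a b c) | exact (idm _) | exact tt ].
Defined.

Definition pI_lunit (x : pI_ob) : pI_hom (pI_ten None x) x := pI_id x.
Definition pI_lunit_inv (x : pI_ob) : pI_hom x (pI_ten None x) := pI_id x.
Definition pI_runit (x : pI_ob) : pI_hom (pI_ten x None) x.
Proof. destruct x; simpl; first [exact (idm _) | exact tt]. Defined.
Definition pI_runit_inv (x : pI_ob) : pI_hom x (pI_ten x None).
Proof. destruct x; simpl; first [exact (idm _) | exact tt]. Defined.

Definition plusI : MonData :=
  {| msemi := {| scat := {| ob := pI_ob; hom := pI_hom; idm := pI_id;
                             comp := pI_comp |};
                 sten := pI_ten; stenh := pI_tenh;
                 sassoc := pI_assoc; sassoc_inv := pI_assoc_inv |};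
     munit := None;
     lunit := pI_lunit; lunit_inv := pI_lunit_inv;
     runit := pI_runit; runit_inv := pI_runit_inv |}.
End PlusI.

(** * The construction M_{-I}: full semi-monoidal subcategory on objects other
    than the unit.  It is only a semi-monoidal category when the tensor of two
    non-unit objects is never the unit; this closure property is an argument. *)

Definition unit_closed (M : MonData) : Prop :=
  forall x y : ob M, x <> munit -> y <> munit -> sten x y <> munit.

Section MinusI.
Variable M : MonData.
Variable HM : unit_closed M.

Definition mI_ob := { x : ob M | x <> munit }.
Definition mI_hom (x y : mI_ob) : Type := @hom M (proj1_sig x) (proj1_sig y).
Definition mI_ten (x y : mI_ob) : mI_ob :=
  exist _ (sten (proj1_sig x) (proj1_sig y)) (HM (proj2_sig x) (proj2_sig y)).

Definition minusI : SemiData :=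
  {| scat := {| ob := mI_ob; hom := mI_hom;
                idm := fun x => idm (proj1_sig x);
                comp := fun x y z (g : mI_hom y z) (f : mI_hom x y) => comp g f |};
     sten := mI_ten;
     stenh := fun x x' y y' (f : mI_hom x x') (g : mI_hom y y') =>
                (stenh f g : mI_hom (mI_ten x y) (mI_ten x' y'));
     sassoc := fun x y z =>
                 (sassoc (proj1_sig x) (proj1_sig y) (proj1_sig z)
                  : mI_hom (mI_ten x (mI_ten y z)) (mI_ten (mI_ten x y) z));
     sassoc_inv := fun x y z =>
                 (sassoc_inv (proj1_sig x) (proj1_sig y) (proj1_sig z)
                  : mI_hom (mI_ten (mI_ten x y) z) (mI_ten x (mI_ten y z))) |}.
End MinusI.

Definition minusEl (M : MonData) (HM : unit_closed M) : MonData :=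
  plusI (minusI HM).

Definition self_similar (C : MonData) (N : ob C)
           (code : @hom C (sten N N) N) (decode : @hom C N (sten N N)) : Prop :=
  comp code decode = idm N /\ comp decode code = idm (sten N N).

Section Star.
Variable C : MonData.
Variable N : ob C.
Variable code : @hom C (sten N N) N.
Variable decode : @hom C N (sten N N).

Definition star (f g : @hom C N N) : @hom C N N :=
  comp code (comp (stenh f g) decode).

Definition star_assoc : @hom C N N :=
  comp code (comp (stenh code (idm N))
    (comp (sassoc N N N) (comp (stenh (idm N) decode) decode))).
Definition star_assoc_inv : @hom C N N :=
  comp code (comp (stenh (idm N) code)
    (comp (sassoc_inv N N N) (comp (stenh decode (idm N)) decode))).

Definition starSemi : SemiData :=
  {| scat := {| ob := unit; hom := fun _ _ => @hom C N N;
                idm := fun _ => idm N;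
                comp := fun _ _ _ g f => comp g f |};
     sten := fun _ _ => tt;
     stenh := fun _ _ _ _ f g => star f g;
     sassoc := fun _ _ _ => star_assoc;
     sassoc_inv := fun _ _ _ => star_assoc_inv |}.
End Star.

(** * The monoidal subcategory N^(x) generated by N.
    Non-unit objects: formal (x)-words in N and I containing at least one N,
    interpreted in C; the unit is I itself.
    Tensor: words are tensored formally (interpreted as the tensor in C);
    the only exception is I (x) I, which is identified with I via lambda_I. *)

Inductive word := wN | wI | wT (u v : word).

Fixpoint hasN (w : word) : bool :=
  match w with
  | wN => true
  | wI => false
  | wT u v => hasN u || hasN v
  end.

Section NTensor.
Variable C : MonData.
Variable N : ob C.

Fixpoint interp (w : word) : ob C :=
  match w with
  | wN => N
  | wI => munit
  | wT u v => sten (interp u) (interp v)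
  end.

Definition nword := { w : word | hasN w = true }.

Definition nt_ob := option nword.

Definition nt_interp (x : nt_ob) : ob C :=
  match x with None => munit | Some w => interp (proj1_sig w) end.

Definition nt_hom (x y : nt_ob) : Type := @hom C (nt_interp x) (nt_interp y).

Lemma hasN_l (u v : word) : hasN u = true -> hasN (wT u v) = true.
Proof. simpl; intros H; rewrite H; reflexivity. Qed.
Lemma hasN_r (u v : word) : hasN v = true -> hasN (wT u v) = true.
Proof. simpl; intros H; rewrite H, orb_true_r; reflexivity. Qed.

Definition nt_ten (x y : nt_ob) : nt_ob :=
  match x, y with
  | None, None => None
  | None, Some w => Some (exist _ (wT wI (proj1_sig w)) (@hasN_r wI (proj1_sig w) (proj2_sig w)))
  | Some w, None => Some (exist _ (wT (proj1_sig w) wI) (@hasN_l (proj1_sig w) wI (proj2_sig w)))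
  | Some v, Some w =>
      Some (exist _ (wT (proj1_sig v) (proj1_sig w)) (@hasN_l (proj1_sig v) (proj1_sig w) (proj2_sig v)))
  end.

Definition nt_k (x y : nt_ob) : @hom C (sten (nt_interp x) (nt_interp y))
                                       (nt_interp (nt_ten x y)) :=
  match x as x0, y as y0 return @hom C (sten (nt_interp x0) (nt_interp y0))
                                       (nt_interp (nt_ten x0 y0)) with
  | None, None => lunit munit
  | None, Some w => idm _
  | Some w, None => idm _
  | Some v, Some w => idm _
  end.
Definition nt_kinv (x y : nt_ob) : @hom C (nt_interp (nt_ten x y))
                                          (sten (nt_interp x) (nt_interp y)) :=
  match x as x0, y as y0 return @hom C (nt_interp (nt_ten x0 y0))
                                       (sten (nt_interp x0) (nt_interp y0)) with
  | None, None => lunit_inv munit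
  | None, Some w => idm _
  | Some w, None => idm _
  | Some v, Some w => idm _
  end.

Definition nt_tenh (x x' y y' : nt_ob) (f : nt_hom x x') (g : nt_hom y y') :
  nt_hom (nt_ten x y) (nt_ten x' y') :=
  comp (nt_k x' y') (comp (stenh f g) (nt_kinv x y)).

Definition nt_assoc (x y z : nt_ob) :
  nt_hom (nt_ten x (nt_ten y z)) (nt_ten (nt_ten x y) z) :=
  comp (nt_k (nt_ten x y) z)
   (comp (stenh (nt_k x y) (idm (nt_interp z)))
    (comp (sassoc (nt_interp x) (nt_interp y) (nt_interp z))
     (comp (stenh (idm (nt_interp x)) (nt_kinv y z))
           (nt_kinv x (nt_ten y z))))).

Definition nt_assoc_inv (x y z : nt_ob) :
  nt_hom (nt_ten (nt_ten x y) z) (nt_ten x (nt_ten y z)) :=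
  comp (nt_k x (nt_ten y z))
   (comp (stenh (idm (nt_interp x)) (nt_k y z))
    (comp (sassoc_inv (nt_interp x) (nt_interp y) (nt_interp z))
     (comp (stenh (nt_kinv x y) (idm (nt_interp z)))
           (nt_kinv (nt_ten x y) z)))).

Definition nt_lunit (x : nt_ob) : nt_hom (nt_ten None x) x :=
  comp (lunit (nt_interp x)) (nt_kinv None x).
Definition nt_lunit_inv (x : nt_ob) : nt_hom x (nt_ten None x) :=
  comp (nt_k None x) (lunit_inv (nt_interp x)).
Definition nt_runit (x : nt_ob) : nt_hom (nt_ten x None) x :=
  comp (runit (nt_interp x)) (nt_kinv x None).
Definition nt_runit_inv (x : nt_ob) : nt_hom x (nt_ten x None) :=
  comp (nt_k x None) (runit_inv (nt_interp x)).

Definition Ntensor : MonData :=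
  {| msemi := {| scat := {| ob := nt_ob; hom := nt_hom;
                             idm := fun x => idm (nt_interp x);
                             comp := fun x y z (g : nt_hom y z) (f : nt_hom x y) =>
                                       comp g f |};
                 sten := nt_ten; stenh := nt_tenh;
                 sassoc := nt_assoc; sassoc_inv := nt_assoc_inv |};
     munit := None;
     lunit := nt_lunit; lunit_inv := nt_lunit_inv;
     runit := nt_runit; runit_inv := nt_runit_inv |}.

Lemma Ntensor_unit_closed : unit_closed Ntensor.
Proof.
  intros [v|] [w|] Hv Hw; simpl in *; try congruence; discriminate.
Qed.
End NTensor.

Record MonFunctor (M1 M2 : MonData) := {
  Fob : ob M1 -> ob M2;
  Fhom : forall A B, @hom M1 A B -> @hom M2 (Fob A) (Fob B);
  Fphi : forall A B, @hom M2 (sten (Fob A) (Fob B)) (Fob (sten A B));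
  Fphi_inv : forall A B, @hom M2 (Fob (sten A B)) (sten (Fob A) (Fob B));
  Feps : @hom M2 munit (Fob munit);
  Feps_inv : @hom M2 (Fob munit) munit }.
Arguments Fob {M1 M2} _ _.
Arguments Fhom {M1 M2} _ {A B} _.
Arguments Fphi {M1 M2} _ _ _.
Arguments Fphi_inv {M1 M2} _ _ _.
Arguments Feps {M1 M2} _.
Arguments Feps_inv {M1 M2} _.

Definition is_strong_monoidal (M1 M2 : MonData) (F : MonFunctor M1 M2) : Prop :=
  (forall A : ob M1, Fhom F (idm A) = idm (Fob F A)) /\
  (forall A B D (f : @hom M1 A B) (g : @hom M1 B D),
      Fhom F (comp g f) = comp (Fhom F g) (Fhom F f)) /\
  (forall A A' B B' (f : @hom M1 A A') (g : @hom M1 B B'),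
      comp (Fphi F A' B') (stenh (Fhom F f) (Fhom F g)) =
      comp (Fhom F (stenh f g)) (Fphi F A B)) /\
  (forall A B : ob M1, comp (Fphi_inv F A B) (Fphi F A B) = idm _) /\
  (forall A B : ob M1, comp (Fphi F A B) (Fphi_inv F A B) = idm _) /\
  comp (Feps_inv F) (Feps F) = idm _ /\
  comp (Feps F) (Feps_inv F) = idm _ /\
  (forall A B D : ob M1,
      comp (Fhom F (sassoc A B D))
           (comp (Fphi F A (sten B D)) (stenh (idm (Fob F A)) (Fphi F B D))) =
      comp (Fphi F (sten A B) D)
           (comp (stenh (Fphi F A B) (idm (Fob F D)))
                 (sassoc (Fob F A) (Fob F B) (Fob F D)))) /\
  (forall A : ob M1, comp (Fhom F (lunit A))
                  (comp (Fphi F munit A) (stenh (Feps F) (idm (Fob F A)))) =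
             lunit (Fob F A)) /\
  (forall A : ob M1, comp (Fhom F (runit A))
                  (comp (Fphi F A munit) (stenh (idm (Fob F A)) (Feps F))) =
             runit (Fob F A)).

Definition is_equivalence_functor (M1 M2 : MonData) (F : MonFunctor M1 M2) : Prop :=
  (forall A B (g : @hom M2 (Fob F A) (Fob F B)), exists f, Fhom F f = g) /\
  (forall A B (f f' : @hom M1 A B), Fhom F f = Fhom F f' -> f = f') /\
  (forall Y : ob M2, exists (X : ob M1) (i : @hom M2 (Fob F X) Y)
                            (j : @hom M2 Y (Fob F X)),
      comp i j = idm Y /\ comp j i = idm (Fob F X)).

Definition monoidal_equivalence (M1 M2 : MonData) : Prop :=
  exists F : MonFunctor M1 M2, is_strong_monoidal F /\ is_equivalence_functor F.

Arguments Ntensor_unit_closed : clear implicits.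

Definition NtensorEl (C : MonData) (N : ob C) : MonData :=
  minusEl (Ntensor_unit_closed C N).

(* Main.v *)
Require Import Defs.

Definition nN : nword := exist _ wN eq_refl.

Lemma someNN (C : MonData) (N : ob C) : (Some nN : ob (Ntensor C N)) <> munit.
Proof. discriminate. Qed.

Definition mN (C : MonData) (N : ob C) : mI_ob (Ntensor C N) :=
  exist _ (Some nN) (@someNN C N).

Definition FobE (C : MonData) (N : ob C) (x : option unit) : ob (NtensorEl C N) :=
  match x with None => None | Some _ => Some (mN C N) end.

Definition FhomE (C : MonData) (N : ob C) code decode (A B : option unit) :
  @hom (plusI (starSemi C N code decode)) A B -> @hom (NtensorEl C N) (FobE C N A) (FobE C N B).
Proof.
  destruct A as [[]|], B as [[]|]; simpl; intro f; first [exact f | destruct f | exact tt].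
Defined.

Definition FphiE (C : MonData) (N : ob C) code decode (A B : option unit) :
  @hom (NtensorEl C N) (sten (FobE C N A) (FobE C N B))
       (FobE C N (@sten (plusI (starSemi C N code decode)) A B)).
Proof.
  destruct A as [[]|], B as [[]|]; simpl.
  - exact code.
  - exact (idm _).
  - exact (idm _).
  - exact tt.
Defined.

Definition FphiinvE (C : MonData) (N : ob C) code decode (A B : option unit) :
  @hom (NtensorEl C N) (FobE C N (@sten (plusI (starSemi C N code decode)) A B))
       (sten (FobE C N A) (FobE C N B)).
Proof.
  destruct A as [[]|], B as [[]|]; simpl.
  - exact decode.
  - exact (idm _).
  - exact (idm _).
  - exact tt.
Defined.

Definition FE (C : MonData) (N : ob C) code decode :
  MonFunctor (plusI (starSemi C N code decode)) (NtensorEl C N) :=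
  @Build_MonFunctor (plusI (starSemi C N code decode)) (NtensorEl C N)
     (FobE C N) (FhomE C N code decode)
     (FphiE C N code decode) (FphiinvE C N code decode) tt tt.


Definition Iso (C : MonData) (A B : ob C) : Prop :=
  exists (i : @hom C A B) (j : @hom C B A), comp i j = idm B /\ comp j i = idm A.

Ltac dHC HC := destruct HC as [[[cid1 [cid2 cassoc]] [tid [tcomp [anat [ai1 [ai2 pent]]]]]] [li1 [li2 [ri1 [ri2 [lnat [rnat tri]]]]]]].

Lemma Iso_refl C (HC : is_monoidal C) A : Iso C A A.
Proof. dHC HC. exists (idm A), (idm A). rewrite cid1; auto. Qed.

Lemma Iso_sym C A B : Iso C A B -> Iso C B A.
Proof. intros (i & j & H1 & H2). exists j, i; auto. Qed.

Lemma Iso_trans C (HC : is_monoidal C) A B D : Iso C A B -> Iso C B D -> Iso C A D.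
Proof.
  dHC HC. intros (i & j & H1 & H2) (i' & j' & H3 & H4).
  exists (comp i' i), (comp j j'); split.
  - rewrite <- cassoc, (cassoc _ _ _ _ j' j i), H1, cid1; auto.
  - rewrite <- cassoc, (cassoc _ _ _ _ i i' j'), H4, cid1; auto.
Qed.

Lemma Iso_ten C (HC : is_monoidal C) A B A' B' :
  Iso C A A' -> Iso C B B' -> Iso C (sten A B) (sten A' B').
Proof.
  dHC HC. intros (i & j & H1 & H2) (i' & j' & H3 & H4).
  exists (stenh i i'), (stenh j j'); split; rewrite <- tcomp, ?H1, ?H2, ?H3, ?H4, tid; auto.
Qed.

Lemma word_iso C (HC : is_monoidal C) (N : ob C) code decode
  (HN : self_similar C N code decode) :
  forall w, (hasN w = true -> Iso C N (interp C N w)) /\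
            (hasN w = false -> Iso C munit (interp C N w)).
Proof.
  assert (HNN : Iso C (sten N N) N) by (exists code, decode; destruct HN; auto).
  assert (HL : forall A, Iso C (sten munit A) A).
  { intro A. pose proof HC as HC'. dHC HC'. exists (lunit A), (lunit_inv A); auto. }
  assert (HR : forall A, Iso C (sten A munit) A).
  { intro A. pose proof HC as HC'. dHC HC'. exists (runit A), (runit_inv A); auto. }
  induction w as [| |u [IHu1 IHu2] v [IHv1 IHv2]]; simpl; split; intro H;
    try discriminate.
  - apply Iso_refl; auto.
  - apply Iso_refl; auto.
  - destruct (hasN u) eqn:Hu, (hasN v) eqn:Hv; simpl in H; try discriminate.
    + eapply Iso_trans; [auto| apply Iso_sym, HNN|]. apply Iso_ten; auto.
    + eapply Iso_trans; [auto| apply Iso_sym, (HR N)|]. apply Iso_ten; auto.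
    + eapply Iso_trans; [auto| apply Iso_sym, (HL N)|]. apply Iso_ten; auto.
  - destruct (hasN u) eqn:Hu, (hasN v) eqn:Hv; simpl in H; try discriminate.
    eapply Iso_trans; [auto| apply Iso_sym, (HL munit)|]. apply Iso_ten; auto.
Qed.

Theorem mainTheorem4 (C : MonData) (HC : is_monoidal C) (N : ob C)
    (code : @hom C (sten N N) N) (decode : @hom C N (sten N N))
    (HN : self_similar C N code decode) :
  monoidal_equivalence (plusI (starSemi C N code decode)) (NtensorEl C N).
Proof.
  pose proof HC as HC0.
  destruct HC as [[[cid1 [cid2 cassoc]] [tid [tcomp [anat [ai1 [ai2 pent]]]]]] [li1 [li2 [ri1 [ri2 [lnat [rnat tri]]]]]]].
  destruct HN as [cd dc].
  exists (FE C N code decode). split.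
  - unfold is_strong_monoidal. repeat split.
    + intros [[]|]; reflexivity.
    + intros [[]|] [[]|] [[]|] f g; simpl in *; try destruct f; try destruct g; reflexivity.
    + intros [[]|] [[]|] [[]|] [[]|] f g; simpl in *; try destruct f; try destruct g.
      all: unfold nt_tenh, nt_k, nt_kinv, star in *; simpl in *.
      all: repeat rewrite <- ?cassoc; rewrite ?cid1, ?cid2, ?dc, ?cd, ?cid1, ?cid2; try reflexivity.
    + intros [[]|] [[]|]; simpl; unfold nt_tenh, nt_k, nt_kinv in *; simpl;
      rewrite ?cid1, ?cid2; auto.
    + intros [[]|] [[]|]; simpl; unfold nt_tenh, nt_k, nt_kinv in *; simpl;
      rewrite ?cid1, ?cid2; auto.
    + intros [[]|] [[]|] [[]|]; simpl;
      unfold nt_tenh, nt_assoc, nt_k, nt_kinv, star_assoc in *; simpl in *.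
      all: repeat rewrite <- ?cassoc; rewrite ?tid, ?cid1, ?cid2, ?dc, ?cd, ?cid1, ?cid2; try reflexivity.
      rewrite (cassoc _ _ _ _ _ code decode), dc, cid1, <- tcomp, cid1, dc, tid, cid2.
      reflexivity.
    + intros [[]|]; simpl; unfold nt_tenh, nt_k, nt_kinv in *; simpl; rewrite ?cid1, ?cid2; auto.
    + intros [[]|]; simpl; unfold nt_tenh, nt_k, nt_kinv in *; simpl; rewrite ?cid1, ?cid2; auto.
  - split; [|split].
    + intros [[]|] [[]|] g; simpl in *; try destruct g; eexists; reflexivity.
    + intros [[]|] [[]|] f f'; simpl in *; try destruct f; try destruct f'; auto.
    + intros [[[[w Hw]|] Hne]|]; [| exfalso; apply Hne; reflexivity |].
      * destruct (proj1 (@word_iso C HC0 N code decode (conj cd dc) w) Hw) as (i & j & H1 & H2).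
        exists (Some tt), i, j; auto.
      * exists None, tt, tt; auto.
Qed.
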